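(* For every instance of the CVRPTW with temporal dependencies that has a feasible solution, there exists an optimal feasible solution in which, for every route and every fragment $(v_1,\dots,v_\ell)$ of that route, the start times satisfy $b_{v_i}=\max\{b_{v_{i-1}}+d_{v_{i-1}}+t_{v_{i-1}v_i},\ \alpha_{v_i}\}$ for all $i=2,\dots,\ell-1$ (i.e., every fragment is performed according to a compact schedule).
   Context: Instance data: a task set $V=\{1,\dots,n\}$, a depot $0$, $N=V\cup\{0\}$. For distinct $u,v\in N$ there are a travel time $t_{uv}\ge 0$ and travel cost $c_{uv}\ge0$, both satisfying the triangle inequality. Each $v\in N$ has a duration $d_v\ge 0$, demand $q_v\ge 0$ and a time window $[\alpha_v,\beta_v]$ in which it must start; the depot has $d_0=q_0=0$, $[\alpha_0,\beta_0]=[0,T_{\max}]$. Vehicle capacity is $Q$ and there are $|K|$ vehicles. $D$ is a set of unordered pairs $\{u,v\}$ of distinct tasks, $V_D=\{v\in V:\exists \{u,v\}\in D\}$, and each $\{u,v\}\in D$ carries nonnegative parameters $\delta^{\min}_{uv},\delta^{\max}_{uv},\delta^{\min}_{vu},\delta^{\max}_{vu}$; start times $b_u,b_v$ satisfy the dependency if either $b_u\le b_v$ and $\delta^{\min}_{uv}\le b_v-b_u\le\delta^{\max}_{uv}$, or $b_v\le b_u$ and $\delta^{\min}_{vu}\le b_u-b_v\le\delta^{\max}_{vu}$. A feasible solution consists of at most $|K|$ routes $(0,w_1,\dots,w_m,0)$ such that every task lies in exactly one route, each route has total demand at most $Q$, and there are start times $b_w\in[\alpha_w,\beta_w]$ for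 all tasks with $b_{w_{i+1}}\ge b_{w_i}+d_{w_i}+t_{w_iw_{i+1}}$ along each route (with the depot departure at time $\ge 0$ and return by $T_{\max}$), and all pairs in $D$ satisfying their dependency; its cost is the total travel cost. Optimal means minimum cost. The fragments of a route are its maximal subsequences $(v_1,\dots,v_\ell)$ whose first and last elements are consecutive occurrences (along the route) of nodes from $V_D\cup\{0\}$. *)

(* Defs.v *)
From HB Require Import structures.
From mathcomp Require Import all_boot all_order all_algebra.
Set Implicit Arguments. Unset Strict Implicit. Unset Printing Implicit Defensive.
Import Order.TTheory GRing.Theory Num.Theory.
Local Open Scope ring_scope.

(* Nodes are natural numbers: depot 0, tasks V = {1,...,n}, N = {0,...,n}. *)
Record instance (R : realFieldType) := Instance {
  n_tasks : nat;
  n_vehicles : nat;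
  capQ : R;
  Tmax : R;
  ttime : nat -> nat -> R;
  tcost : nat -> nat -> R;
  dur : nat -> R;
  dem : nat -> R;
  alpha : nat -> R;
  beta : nat -> R;
  deps : seq (nat * nat);        (* D : each pair (u,v) stands for {u,v} *)
  dmin : nat -> nat -> R;
  dmax : nat -> nat -> R
}.

Section Defs.
Variables (R : realFieldType) (I : instance R).

Definition is_task (v : nat) : bool := (1 <= v <= n_tasks I)%N.
Definition is_node (v : nat) : bool := (v <= n_tasks I)%N.

Definition wf_instance : Prop :=
  [/\ (forall u v, is_node u -> is_node v -> u != v ->
          0 <= ttime I u v /\ 0 <= tcost I u v),
      (forall u v w, is_node u -> is_node v -> is_node w ->
          u != v -> v != w -> u != w ->
          ttime I u v <= ttime I u w + ttime I w v /\
          tcost I u v <= tcost I u w + tcost I w v),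
      (forall v, is_node v -> 0 <= dur I v /\ 0 <= dem I v),
      [/\ dur I 0 = 0, dem I 0 = 0, alpha I 0 = 0 & beta I 0 = Tmax I]
    & (forall e, e \in deps I ->
          [/\ is_task e.1, is_task e.2, e.1 != e.2,
              0 <= dmin I e.1 e.2 /\ 0 <= dmax I e.1 e.2
            & 0 <= dmin I e.2 e.1 /\ 0 <= dmax I e.2 e.1])].

Definition in_VD0 (v : nat) : bool :=
  (v == 0%N) || (is_task v && has (fun e => (e.1 == v) || (e.2 == v)) (deps I)).

Definition route_nodes (w : seq nat) : seq nat := 0%N :: w ++ [:: 0%N].

Definition route_times (s : R) (b : nat -> R) (w : seq nat) : seq R :=
  s :: map b w.

Definition route_cost (w : seq nat) : R :=
  \sum_(i < (size w).+1)
     tcost I (nth 0%N (route_nodes w) i) (nth 0%N (route_nodes w) i.+1).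

Definition sol_cost (routes : seq (seq nat)) : R :=
  \sum_(w <- routes) route_cost w.

Definition dep_ok (b : nat -> R) (u v : nat) : Prop :=
  (b u <= b v /\ dmin I u v <= b v - b u <= dmax I u v) \/
  (b v <= b u /\ dmin I v u <= b u - b v <= dmax I v u).

Definition route_time_ok (s : R) (b : nat -> R) (w : seq nat) : Prop :=
  let p := route_nodes w in
  let tm := route_times s b w in
  [/\ 0 <= s,
      (forall i, (i < size w)%N ->
         nth 0 tm i + dur I (nth 0%N p i) + ttime I (nth 0%N p i) (nth 0%N p i.+1)
           <= nth 0 tm i.+1)
    & nth 0 tm (size w) + dur I (nth 0%N p (size w))
        + ttime I (nth 0%N p (size w)) 0%N <= Tmax I].

(* A solution: a list of routes (task sequences), start times b for tasks,
   and a departure time dep r for the r-th route. *)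
Definition feasible (routes : seq (seq nat)) (b : nat -> R) (dep : nat -> R)
  : Prop :=
  [/\ (size routes <= n_vehicles I)%N,
      all (fun w => w != [::]) routes,
      perm_eq (flatten routes) (iota 1 (n_tasks I)),
      (forall w, w \in routes -> \sum_(v <- w) dem I v <= capQ I) &
      [/\ (forall v, is_task v -> alpha I v <= b v <= beta I v),
      (forall r, (r < size routes)%N -> route_time_ok (dep r) b (nth [::] routes r))
    & (forall e, e \in deps I -> dep_ok b e.1 e.2)]].

Definition optimal (routes : seq (seq nat)) (b : nat -> R) (dep : nat -> R)
  : Prop :=
  feasible routes b dep /\
  forall routes' b' dep', feasible routes' b' dep' ->
    sol_cost routes <= sol_cost routes'.

Definition is_fragment (p : seq nat) (j k : nat) : Prop :=
  [/\ (j < k < size p)%N, in_VD0 (nth 0%N p j), in_VD0 (nth 0%N p k)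
    & forall i, (j < i < k)%N -> ~~ in_VD0 (nth 0%N p i)].

Definition compact_fragments (routes : seq (seq nat)) (b : nat -> R)
  (dep : nat -> R) : Prop :=
  forall r, (r < size routes)%N ->
    let w := nth [::] routes r in
    let p := route_nodes w in
    let tm := route_times (dep r) b w in
    forall j k, is_fragment p j k ->
      forall i, (j < i < k)%N ->
        nth 0 tm i =
          Num.max (nth 0 tm i.-1 + dur I (nth 0%N p i.-1)
                     + ttime I (nth 0%N p i.-1) (nth 0%N p i))
                  (alpha I (nth 0%N p i)).

End Defs.

(* Main.v *)
Require Import Defs.
From mathcomp Require Import all_boot all_order all_algebra.
From Stdlib Require Import Classical.
Import Order.TTheory GRing.Theory Num.Theory.
Local Open Scope ring_scope.

Fixpoint allseqs (k : nat) (A : seq nat) : seq (seq nat) :=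
  match k with
  | 0%N => [:: [::]]
  | k'.+1 => [seq x :: s | x <- A, s <- allseqs k' A]
  end.

Lemma allseqsP (A : seq nat) (s : seq nat) :
  all (fun x => x \in A) s -> s \in allseqs (size s) A.
Proof.
elim: s => [|x s IH] //= /andP[xA sA].
apply/allpairsP; exists (x, s); split => //; exact: IH.
Qed.

Fixpoint allseqs2 (k : nat) (A : seq (seq nat)) : seq (seq (seq nat)) :=
  match k with
  | 0%N => [:: [::]]
  | k'.+1 => [seq x :: s | x <- A, s <- allseqs2 k' A]
  end.

Lemma allseqs2P (A : seq (seq nat)) (s : seq (seq nat)) :
  all (fun x => x \in A) s -> s \in allseqs2 (size s) A.
Proof.
elim: s => [|x s IH] //= /andP[xA sA].
apply/allpairsP; exists (x, s); split => //; exact: IH.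
Qed.

Definition bseqs (n : nat) (A : seq nat) :=
  flatten [seq allseqs k A | k <- iota 0 n.+1].
Definition bseqs2 (n : nat) (A : seq (seq nat)) :=
  flatten [seq allseqs2 k A | k <- iota 0 n.+1].

Lemma bseqsP n A s : (size s <= n)%N -> all (fun x => x \in A) s -> s \in bseqs n A.
Proof.
move=> hs hA; apply/flatten_mapP; exists (size s); last exact: allseqsP.
by rewrite mem_iota /= add0n ltnS.
Qed.

Lemma bseqs2P n A s : (size s <= n)%N -> all (fun x => x \in A) s -> s \in bseqs2 n A.
Proof.
move=> hs hA; apply/flatten_mapP; exists (size s); last exact: allseqs2P.
by rewrite mem_iota /= add0n ltnS.
Qed.

Lemma exists_min (R : realFieldType) (L : seq (seq (seq nat)))
  (P : seq (seq nat) -> Prop) (f : seq (seq nat) -> R) :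
  (forall x, P x -> x \in L) -> (exists x, P x) ->
  exists x, P x /\ forall y, P y -> f x <= f y.
Proof.
move=> PL [x0 Px0].
suff: exists x, P x /\ forall y, y \in L -> P y -> f x <= f y.
  by case=> x [Px H]; exists x; split => // y Py; apply: H (PL _ Py) Py.
have : exists x, x \in L /\ P x by exists x0; split => //; exact: PL.
elim: L {PL} => [|a L IH] [x [xin Px]] //.
case: (classic (exists y, y \in L /\ P y)) => [hL|hL].
  case: (IH hL) => m [Pm Hm].
  case: (classic (P a)) => Pa.
    case: (lerP (f a) (f m)) => hc.
      exists a; split => // y; rewrite inE => /orP[/eqP->|yL] Py //.
      exact: le_trans hc (Hm _ yL Py).
    exists m; split => // y; rewrite inE => /orP[/eqP->|yL] Py.
      exact: ltW.
    exact: Hm.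
  exists m; split => // y; rewrite inE => /orP[/eqP->|yL] Py //; last exact: Hm.
exists a.
have xa : x = a.
  move: xin; rewrite inE => /orP[/eqP //|xL]; exfalso; apply: hL; by exists x.
split; first by rewrite -xa.
move=> y; rewrite inE => /orP[/eqP->|yL] Py //.
exfalso; apply: hL; by exists y.
Qed.
Lemma uniq_flatten_mem (rs : seq (seq nat)) w : uniq (flatten rs) -> w \in rs -> uniq w.
Proof.
elim: rs => [|a rs IH] //= ; rewrite cat_uniq => /and3P[ua _ ur].
by rewrite inE => /orP[/eqP->|]//; apply: IH.
Qed.

Lemma size_flatten_mem (rs : seq (seq nat)) w : w \in rs -> (size w <= size (flatten rs))%N.
Proof.
elim: rs => [|a rs IH] //=; rewrite size_cat inE => /orP[/eqP->|/IH h].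
  exact: leq_addr.
by rewrite (leq_trans h) // leq_addl.
Qed.

Lemma find_route (rs : seq (seq nat)) r y : uniq (flatten rs) -> (r < size rs)%N ->
  y \in nth [::] rs r -> find (fun w => y \in w) rs = r.
Proof.
elim: rs r => [|a rs IH] r //=; rewrite cat_uniq => /and3P[ua hh ur].
case: r => [|r] /= hr hy; first by rewrite hy.
have yf : y \in flatten rs by apply/flattenP; exists (nth [::] rs r) => //; exact: mem_nth.
have -> : (y \in a) = false.
  apply/negbTE/negP => ya; move/negP: hh; apply; apply/hasP; by exists y.
by rewrite (IH r).
Qed.
Fixpoint Tsch (R : realFieldType) (I : instance R) (s : R) (b : nat -> R)
  (p : seq nat) (i : nat) : R :=
  match i with
  | 0%N => s
  | i'.+1 =>
      let x := nth 0%N p i'.+1 in let y := nth 0%N p i' in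
      if in_VD0 I x then b x
      else Num.max (Tsch R I s b p i' + dur I y + ttime I y x) (alpha I x)
  end.
Arguments Tsch {R}.

Lemma rn_nth (w : seq nat) i : (i < size w)%N -> nth 0%N (route_nodes w) i.+1 = nth 0%N w i.
Proof. by move=> h; rewrite /route_nodes /= nth_cat h. Qed.

Lemma rt_nth (R : realFieldType) (s : R) b (w : seq nat) i : (i < size w)%N ->
  nth 0 (route_times s b w) i.+1 = b (nth 0%N w i).
Proof. by move=> h; rewrite /route_times /= (nth_map 0%N). Qed.

Section S.
Variables (R : realFieldType) (I : instance R) (s : R) (b : nat -> R) (w : seq nat).
Hypothesis ok : route_time_ok I s b w.
Hypothesis alw : forall x, x \in w -> alpha I x <= b x.
Let p := route_nodes w.
Let tm := route_times s b w.

Lemma T_le i : (i <= size w)%N -> Tsch I s b p i <= nth 0 tm i.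
Proof.
case: ok => _ hstep _.
elim: i => [|i IH] hi; first by [].
rewrite /tm rt_nth //=.
rewrite nth_cat hi.
case: ifP => _ //.
rewrite ge_max alw ?mem_nth // andbT.
have h := hstep i hi; rewrite rt_nth // rn_nth // in h; apply: le_trans h.
rewrite lerD2r lerD2r.
exact: IH (ltnW hi).
Qed.

Lemma T_alpha i : (i < size w)%N -> alpha I (nth 0%N w i) <= Tsch I s b p i.+1.
Proof.
move=> hi /=; rewrite nth_cat hi; case: ifP => _; first by rewrite alw ?mem_nth.
by rewrite le_max lexx orbT.
Qed.

Lemma T_step i : (i < size w)%N ->
  Tsch I s b p i + dur I (nth 0%N p i) + ttime I (nth 0%N p i) (nth 0%N p i.+1)
  <= Tsch I s b p i.+1.
Proof.
case: ok => _ hstep _ hi.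
rewrite [Tsch I s b p i.+1]/= -/p.
case: ifP => hv; last by rewrite le_max lexx.
have -> : b (nth 0%N p i.+1) = nth 0 tm i.+1 by rewrite rt_nth // rn_nth.
apply: le_trans (hstep i hi).
by rewrite lerD2r lerD2r; apply: T_le; exact: ltnW.
Qed.
End S.
Arguments T_le {R I s b w}.
Arguments T_alpha {R I s b w}.
Arguments T_step {R I s b w}.
Definition bnew (R : realFieldType) (I : instance R) (routes : seq (seq nat))
  (b : nat -> R) (dep : nat -> R) : nat -> R := fun y =>
  let r := find (fun w : seq nat => y \in w) routes in
  if (r < size routes)%N && ~~ in_VD0 I y then
    Tsch I (dep r) b (route_nodes (nth [::] routes r)) (index y (nth [::] routes r)).+1
  else b y.
Arguments bnew {R}.

Lemma bnew_VD (R : realFieldType) (I : instance R) routes b dep y :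
  in_VD0 I y -> bnew I routes b dep y = b y.
Proof. by move=> h; rewrite /bnew h andbF. Qed.

Lemma tm_eq (R : realFieldType) (I : instance R) routes b dep r :
  uniq (flatten routes) -> (r < size routes)%N ->
  forall i, (i <= size (nth [::] routes r))%N ->
  nth 0 (route_times (dep r) (bnew I routes b dep) (nth [::] routes r)) i =
  Tsch I (dep r) b (route_nodes (nth [::] routes r)) i.
Proof.
move=> hu hr [|i] hi //.
set w := nth [::] routes r.
have wr : w \in routes by exact: mem_nth.
have uw : uniq w by exact: uniq_flatten_mem hu wr.
rewrite rt_nth //.
have yw : nth 0%N w i \in w by exact: mem_nth.
rewrite /bnew (@find_route _ _ _ hu hr yw) hr /= -/w index_uniq //.
rewrite nth_cat hi.
case h: (in_VD0 I (nth 0%N w i)) => /=; by rewrite ?nth_cat ?hi ?h.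
Qed.

Theorem mainTheorem3 (R : realFieldType) (I : instance R) :
  wf_instance I ->
  (exists routes b dep, feasible I routes b dep) ->
  exists routes b dep,
    optimal I routes b dep /\ compact_fragments I routes b dep.
Proof.
move=> wf [rs0 [b0 [dep0 f0]]].
have [rs [[b [dep F]] Hmin]] : exists x, (exists b dep, feasible I x b dep) /\
    forall y, (exists b dep, feasible I y b dep) -> sol_cost I x <= sol_cost I y.
  apply: (@exists_min R (bseqs2 (n_vehicles I) (bseqs (n_tasks I) (iota 1 (n_tasks I))))); last by exists rs0, b0, dep0.
  move=> x [b1 [d1 [hK _ hperm _ _]]].
  apply: bseqs2P => //; apply/allP => w wx; apply: bseqsP.
    rewrite -(size_iota 1 (n_tasks I)) -(perm_size hperm); exact: size_flatten_mem.
  apply/allP => y yw; rewrite -(perm_mem hperm); apply/flattenP; by exists w.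
have Fs := F; case: F => hK hne hperm hcap [hwin htime hdep].
  have hu : uniq (flatten rs) by rewrite (perm_uniq hperm) iota_uniq.
  have intask : forall w y, w \in rs -> y \in w -> is_task I y.
    move=> w y wr yw.
    have : y \in flatten rs by apply/flattenP; exists w.
    by rewrite (perm_mem hperm) mem_iota /is_task add1n ltnS.
  exists rs, (bnew I rs b dep), dep; split; first split.
  + split => //; split.
    * move=> v tv.
      rewrite /bnew; case: ifP => [/andP[hr _]|_]; last exact: hwin.
      set r := find _ rs in hr *.
      set w := nth [::] rs r.
      have vw : v \in w by have := nth_find [::] (a := fun w => v \in w) (s := rs); rewrite has_find; apply.
      have wr : w \in rs by exact: mem_nth.
      have hi : (index v w < size w)%N by rewrite index_mem.
      have alw : forall x, x \in w -> alpha I x <= b x.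
        by move=> x xw; case/andP: (hwin x (intask w x wr xw)).
      have ok := htime r hr.
      apply/andP; split.
        by have := T_alpha alw _ hi; rewrite nth_index.
      apply: le_trans (T_le ok alw _ hi) _.
      rewrite rt_nth // nth_index //.
      by case/andP: (hwin v tv).
    * move=> r hr.
      set w := nth [::] rs r.
      have wr : w \in rs by exact: mem_nth.
      have alw : forall x, x \in w -> alpha I x <= b x.
        by move=> x xw; case/andP: (hwin x (intask w x wr xw)).
      have ok := htime r hr.
      have ok' := ok; case: ok' => h0 hs hend.
      split => //.
        move=> i hi; rewrite !tm_eq //; last exact: ltnW.
        exact: T_step ok alw _ hi.
      rewrite tm_eq //; apply: le_trans hend; rewrite lerD2r lerD2r.
      exact: T_le ok alw _ (leqnn _).
    * move=> e he.
      case: wf => _ _ _ _ hD; have [t1 t2 _ _ _] := hD e he.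
      have v1 : in_VD0 I e.1.
        by rewrite /in_VD0 t1 /=; apply/orP; right; apply/hasP; exists e => //; rewrite eqxx.
      have v2 : in_VD0 I e.2.
        by rewrite /in_VD0 t2 /=; apply/orP; right; apply/hasP; exists e => //; rewrite eqxx orbT.
      by rewrite /dep_ok !bnew_VD //; exact: hdep.
  + move=> rs' b' dep' F'; apply: Hmin; by exists b', dep'.
  + move=> r hr /= j k [/andP[hjk hk] _ _ hmid] i /andP[hji hik].
    have hiw : (i <= size (nth [::] rs r))%N.
      by move: hk; rewrite /route_nodes /= size_cat /= addn1 ltnS => hk; rewrite -ltnS (leq_trans hik).
    case: i hji hik hiw => [|i] // hji hik hiw.
    rewrite !tm_eq //; last exact: ltnW.
    rewrite [Tsch _ _ _ _ i.+1]/=.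
    by rewrite (negbTE (hmid i.+1 (introT andP (conj hji hik)))).
Qed.
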